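(* Let $\mathcal G$ be an undirected connected graph with $n\ge 2$ nodes and $m$ edges, with incidence matrix $D=[D_\tau\ D_c]$, spanning-tree incidence matrix $D_\tau$, matrix $R=[I_{n-1}\ T_\tau^c]$, edge-weight matrix $W\succ 0$ (diagonal) and time-scale matrix $E\succ 0$ (diagonal), all as described in the context. Then the matrix $-L_{e,s}^\tau R W R^T\in\mathbb R^{(n-1)\times(n-1)}$, where $L_{e,s}^\tau=D_\tau^T E^{-1}D_\tau$, is diagonalizable.
   Context: Let $\mathcal G$ be an undirected, connected graph without self-loops, with node set $\{1,\dots,n\}$ ($n\ge2$) and edge set $\mathcal E$, $m=|\mathcal E|$. Give each edge an arbitrary orientation; the incidence matrix $D\in\mathbb R^{n\times m}$ has $D_{il}=1$ if node $i$ is the initial node of edge $l$, $-1$ if it is the terminal node, and $0$ otherwise. Fix a spanning tree $\mathcal G_\tau$ of $\mathcal G$ and order the edges so that the first $n-1$ are the tree edges; write $D=[D_\tau\ D_c]$ with $D_\tau\in\mathbb R^{n\times(n-1)}$ (incidence matrix of the tree) and $D_c$ the incidence matrix of the remaining (co-tree) edges. Set $T_\tau^c=(D_\tau^TD_\tau)^{-1}D_\tau^TD_c$ and $R=[I_{n-1}\ T_\tau^c]\in\mathbb R^{(n-1)\times m}$ (so $D=D_\tau R$). Let $W=\mathrm{diag}(w_1,\dots,w_m)$ with all $w_l>0$ (edge weights) and $E=\mathrm{diag}(\epsilon_1,\dots,\epsilon_n)$ with all $\epsilon_i>0$ (node time scales). The time-scaled edge Laplacian of the tree is $L_{e,s}^\tau=D_\tau^TE^{-1}D_\tau$.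 *)

(* Defs.v *)
From mathcomp Require Import all_boot all_order all_algebra.
Set Implicit Arguments. Unset Strict Implicit. Unset Printing Implicit Defensive.
Import Order.TTheory GRing.Theory Num.Theory.
Local Open Scope ring_scope.

(* An oriented graph on nodes 'I_n with edges 'I_m: edge l goes from
   its initial node [tl l] to its terminal node [hd l]. *)

Definition incidence (R : pzRingType) (n m : nat) (tl hd : 'I_m -> 'I_n)
  : 'M[R]_(n, m) :=
  \matrix_(i < n, l < m)
    (if i == tl l then 1 else if i == hd l then -1 else 0).

Definition no_self_loops (n m : nat) (tl hd : 'I_m -> 'I_n) : Prop :=
  forall l, tl l != hd l.

Definition no_parallel_edges (n m : nat) (tl hd : 'I_m -> 'I_n) : Prop :=
  forall l l', l != l' ->
    ~ ((tl l == tl l') && (hd l == hd l') ||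
       (tl l == hd l') && (hd l == tl l')).

Definition adj_on (n m : nat) (tl hd : 'I_m -> 'I_n) (P : pred 'I_m)
  : rel 'I_n :=
  fun x y => [exists l, P l &&
     (((tl l == x) && (hd l == y)) || ((tl l == y) && (hd l == x)))].

Definition connected_on (n m : nat) (tl hd : 'I_m -> 'I_n) (P : pred 'I_m)
  : Prop :=
  forall x y : 'I_n, connect (adj_on tl hd P) x y.

(* Acyclic edge set: removing any edge of P disconnects its endpoints
   within the subgraph P (i.e. no edge of P lies on a cycle of P). *)
Definition acyclic_on (n m : nat) (tl hd : 'I_m -> 'I_n) (P : pred 'I_m)
  : Prop :=
  forall l, P l ->
    ~~ connect (adj_on tl hd (predD1 P l)) (tl l) (hd l).

(* The edges in P form a spanning tree: connected, acyclic, touching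
   every node (spanning follows from connectedness on all of 'I_n). *)
Definition spanning_tree_on (n m : nat) (tl hd : 'I_m -> 'I_n) (P : pred 'I_m)
  : Prop :=
  connected_on tl hd P /\ acyclic_on tl hd P.

Definition first_edges (m n : nat) : pred 'I_m := fun l => (l < n.-1)%N.

Section Mats.
Variables (R : fieldType) (n k : nat).
Variables (tl hd : 'I_(n.-1 + k) -> 'I_n).

Definition Dmat : 'M[R]_(n, n.-1 + k) := incidence R tl hd.
Definition Dtau : 'M[R]_(n, n.-1) := lsubmx Dmat.
Definition Dc : 'M[R]_(n, k) := rsubmx Dmat.

Definition Ttc : 'M[R]_(n.-1, k) :=
  invmx (Dtau^T *m Dtau) *m Dtau^T *m Dc.

Definition Rmat : 'M[R]_(n.-1, n.-1 + k) := row_mx 1%:M Ttc.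

Definition Les_tau (eps : 'rV[R]_n) : 'M[R]_(n.-1) :=
  Dtau^T *m invmx (diag_mx eps) *m Dtau.
End Mats.

(* Main.v *)
Require Import Defs.
From mathcomp Require Import all_boot all_order all_algebra.
From mathcomp Require Import reals.
From mathcomp Require Import complex spectral sesquilinear.
Import Order.TTheory GRing.Theory Num.Theory.
Set Implicit Arguments. Unset Strict Implicit. Unset Printing Implicit Defensive.
Local Open Scope ring_scope.

Module CoreM.
Import Num.Def.
Section Core.
Variable R : rcfType.
Local Notation C := (complex R).
Local Notation f := (real_complex R).

Lemma f_real (x : R) : f x \is Num.real.
Proof. by apply/complex_realP; exists x. Qed.

Lemma conjf (x : R) : (f x)^* = f x.
Proof. exact: conj_Creal (f_real x). Qed.

Lemma tc_map m n (X : 'M[R]_(m, n)) :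
  ((map_mx f X) ^t conjC)%sesqui = map_mx f X^T.
Proof. by apply/matrixP => i j; rewrite !mxE conjf. Qed.

Lemma tc_sym n (X : 'M[R]_n) : X^T = X ->
  ((map_mx f X) ^t conjC)%sesqui = map_mx f X.
Proof. by move=> XS; apply/matrixP => i j; rewrite !mxE conjf -[in RHS]XS mxE. Qed.

Lemma core N m (A : 'M[R]_N.+1) (Y : 'M[R]_(N.+1, m)) :
  A^T = A -> row_free Y -> diagonalizable (A *m (Y *m Y^T)).
Proof.
move=> Asym Yfree.
set M := A *m (Y *m Y^T).
pose Yc := map_mx f Y. pose Ac := map_mx f A.
have le_Nm : (N.+1 <= m)%N by rewrite -(eqP Yfree) rank_leq_col.
pose Q := schmidt Yc.
have Qu : Q \is unitarymx by apply: schmidt_unitarymx.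
have [T YTQ] : exists T, Yc = T *m Q by exists (Yc *m pinvmx Q); rewrite mulmxKpV ?schmidt_sub.
have Tfree : row_free T.
  rewrite /row_free eqn_leq rank_leq_row /=.
  have rY : \rank Yc = N.+1 by rewrite mxrank_map; exact/eqP.
  by rewrite -[X in (X <= _)%N]rY YTQ mxrankM_maxl.
have Tu : T \in unitmx by rewrite -row_free_unit.
pose Ts := (T ^t conjC)%sesqui.
have Tsu : Ts \in unitmx.
  by rewrite -row_free_unit /row_free mxrank_map mxrank_tr; exact: Tfree.
have Mf : map_mx f M = Ac *m T *m Ts.
  rewrite /M !map_mxM -/Yc -/Ac -tc_map -/Yc YTQ.
  rewrite trmx_mul map_mxM -/Ts !mulmxA; congr (_ *m _).
  by rewrite -mulmxA (unitarymxP Qu) mulmx1.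
pose S := Ts *m Ac *m T.
have Sh : S \is hermsymmx.
  apply/is_hermitianmxP; rewrite expr0 scale1r /S !trmx_mul !map_mxM.
  rewrite /Ts trmxCK; by rewrite /Ac tc_sym // mulmxA.
pose P := spectralmx S; pose d := spectral_diag S.
have SE : S = invmx P *m diag_mx d *m P.
  exact/orthomx_spectralP/hermitian_normalmx.
have dreal := hermitian_spectral_diag_real Sh.
pose rs := undup [seq complex.Re (d 0 i) | i <- enum 'I_N.+1].
apply/diagonalizableP; exists rs; first exact: undup_uniq.
apply: mxminpoly_min; apply/eqP; rewrite -(map_mx_eq0 f) map_horner_mx.
rewrite rmorph_prod /=.
under eq_bigr do rewrite map_polyXsubC.
set p := (\prod_(i <- rs) _).
have -> : map_mx f M = invmx Ts *m S *m invmx (invmx Ts).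
  by rewrite invmxK Mf /S !mulmxA (mulVmx Tsu) mul1mx.
have Tsiu : invmx Ts \is a GRing.unit by rewrite unitmx_inv.
rewrite (horner_mx_uconj _ _ Tsiu).
have Pu : invmx P \is a GRing.unit by rewrite unitmx_inv spectral_unit.
rewrite SE -{2}(invmxK P) (horner_mx_uconj _ _ Pu) horner_mx_diag.
have -> : map_mx (horner p) d = 0.
  apply/matrixP => i j; rewrite !mxE ord1.
  apply/rootP; rewrite /p -(big_map f xpredT (fun c => 'X - c%:P)) root_prod_XsubC.
  have dr : d 0 j \is Num.real by apply: (mxOverP dreal).
  rewrite -(RRe_real dr) map_f // mem_undup.
  by apply/mapP; exists j; rewrite ?mem_enum.
have -> : diag_mx (0 : 'rV[C]_N.+1) = 0 by apply/matrixP => i j; rewrite !mxE mul0rn.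
by rewrite mulmx0 mul0mx mulmx0 mul0mx.
Qed.
End Core.

End CoreM.

Theorem proposition1 (R : realType) (n k : nat) (Hn : (2 <= n)%N)
  (tl hd : 'I_(n.-1 + k) -> 'I_n)
  (Hloop : no_self_loops tl hd)
  (Hpar : no_parallel_edges tl hd)
  (Hconn : connected_on tl hd predT)
  (Htree : spanning_tree_on tl hd (@first_edges (n.-1 + k)%N n))
  (w : 'rV[R]_(n.-1 + k)) (Hw : forall l, 0 < w 0 l)
  (eps : 'rV[R]_n) (Heps : forall i, 0 < eps 0 i) :
  diagonalizable
    (- (Les_tau tl hd eps *m Rmat R tl hd *m diag_mx w *m (Rmat R tl hd)^T)).
Proof.
case: n => [|[|N]] // in Hn tl hd Hloop Hpar Hconn Htree w Hw eps Heps *.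
set L := Les_tau tl hd eps.
set Rm := Rmat R tl hd.
pose s := map_mx (@Num.sqrt R) w.
pose Y := Rm *m diag_mx s.
have ss : diag_mx s *m (diag_mx s)^T = diag_mx w.
  rewrite tr_diag_mx mul_diag_mx; apply/matrixP => i j; rewrite !mxE.
  have [->|_] := eqVneq i j; last by rewrite !mulr0n mulr0.
  by rewrite !mulr1n -expr2 sqr_sqrtr // ltW.
have -> : - (L *m Rm *m diag_mx w *m Rm^T) = (- L) *m (Y *m Y^T).
  by rewrite /Y trmx_mul -!mulmxA (mulmxA (diag_mx s)) ss mulNmx !mulmxA.
apply: CoreM.core.
  rewrite linearN /= /L /Les_tau !trmx_mul trmxK trmx_inv tr_diag_mx.
  by rewrite !mulmxA.
rewrite /row_free /Y mxrankMfree; last first.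
  rewrite row_free_unit unitmxE det_diag unitfE.
  rewrite prodf_seq_neq0; apply/allP => i _ /=; rewrite mxE.
  by rewrite sqrtr_eq0 -ltNge.
rewrite eqn_leq rank_leq_row /=.
have r1 : \rank (1%:M : 'M[R]_N.+1) = N.+1 by rewrite mxrank1.
rewrite -[X in (X <= _)%N]r1.
have -> : (1%:M : 'M[R]_N.+1) = Rm *m col_mx 1%:M 0.
  by rewrite /Rm /Rmat mul_row_col mul1mx mulmx0 addr0.
exact: mxrankM_maxl.
Qed.
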